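(* Let $I\subseteq[0,\infty)$ be an interval, let $f:I\to\mathbb{R}$ be twice differentiable on $I^\circ$, and let $a,b\in I^\circ$ with $a<b$ such that $f''\in L^1[a,b]$. Let $q\ge1$ and assume $|f''|^q$ is quasi-convex on $[a,b]$. Let $d: a=x_0<x_1<\dots<x_n=b$ be a partition of $[a,b]$, let $T(f,d)=\sum_{i=0}^{n-1}\frac{f(x_i)+f(x_{i+1})}{2}(x_{i+1}-x_i)$ and $E(f,d)=\int_a^b f(x)\,dx-T(f,d)$. Then $$|E(f,d)|\le \frac14\left(\frac{2}{(q+1)(q+2)}\right)^{\frac1q}\sum_{i=0}^{n-1}(x_{i+1}-x_i)^3\left(\max\{|f''(x_i)|^q,|f''(x_{i+1})|^q\}\right)^{\frac1q}.$$
   Context: A function $g:[a,b]\to\mathbb{R}$ is quasi-convex on $[a,b]$ if $g(\lambda x+(1-\lambda)y)\le\max\{g(x),g(y)\}$ for all $x,y\in[a,b]$ and $\lambda\in[0,1]$. *)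

(* Defs.v *)
From Stdlib Require Import Reals Lra List.
Import ListNotations.
Open Scope R_scope.

(* Real power x^p for x >= 0, with the convention 0^p = 0 (p > 0).
   Stdlib's Rpower 0 p is exp (p * ln 0) = 1, so we patch the case x = 0. *)
Definition rpow (x p : R) : R :=
  if Req_EM_T x 0 then 0 else Rpower x p.

Definition rsum (n : nat) (g : nat -> R) : R :=
  fold_right Rplus 0 (map g (seq 0 n)).

Definition is_interval (I : R -> Prop) : Prop :=
  forall x y z, I x -> I z -> x <= y <= z -> I y.

Definition quasi_convex_on (g : R -> R) (a b : R) : Prop :=
  forall x y l, a <= x <= b -> a <= y <= b -> 0 <= l <= 1 ->
    g (l * x + (1 - l) * y) <= Rmax (g x) (g y).

Definition is_partition (a b : R) (n : nat) (x : nat -> R) : Prop :=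
  x 0%nat = a /\ x n = b /\ forall i, (i < n)%nat -> x i < x (S i).

Definition trap (f : R -> R) (n : nat) (x : nat -> R) : R :=
  rsum n (fun i => (f (x i) + f (x (S i))) / 2 * (x (S i) - x i)).

Definition trap_err (f : R -> R) (a b : R) (pr : Riemann_integrable f a b)
  (n : nat) (x : nat -> R) : R :=
  RiemannInt pr - trap f n x.

(* Main.v *)
Require Import Defs.
From Stdlib Require Import Reals Lra Lia List.
From Coquelicot Require Import Coquelicot.
Import ListNotations.
Open Scope R_scope.

Lemma fr_shift (l : list R) a : fold_right Rplus a l = fold_right Rplus 0 l + a.
Proof. induction l; simpl; [lra|rewrite IHl; lra]. Qed.

Lemma rsum_S n g : rsum (S n) g = rsum n g + g n.
Proof. unfold rsum. rewrite seq_S, map_app, fold_right_app. simpl.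
  rewrite fr_shift. lra. Qed.

Lemma rsum_0 g : rsum 0 g = 0.
Proof. reflexivity. Qed.

Lemma rsum_le n g h : (forall i, (i < n)%nat -> g i <= h i) -> rsum n g <= rsum n h.
Proof. induction n; intros H. rewrite !rsum_0; lra.
  rewrite !rsum_S. assert (g n <= h n) by (apply H; lia).
  assert (rsum n g <= rsum n h) by (apply IHn; intros; apply H; lia). lra. Qed.

Lemma rsum_minus n g h : rsum n (fun i => g i - h i) = rsum n g - rsum n h.
Proof. induction n. rewrite !rsum_0; lra. rewrite !rsum_S, IHn; lra. Qed.

Lemma rsum_abs n g : Rabs (rsum n g) <= rsum n (fun i => Rabs (g i)).
Proof. induction n. rewrite !rsum_0, Rabs_R0; lra.
  rewrite !rsum_S. eapply Rle_trans; [apply Rabs_triang|]. lra. Qed.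

Lemma rsum_scal n c g : rsum n (fun i => c * g i) = c * rsum n g.
Proof. induction n. rewrite !rsum_0; lra. rewrite !rsum_S, IHn; lra. Qed.

Lemma rpow_ge0 x p : 0 <= rpow x p.
Proof. unfold rpow. destruct Req_EM_T. lra. unfold Rpower. left; apply exp_pos. Qed.

Lemma rpow_pos x p : 0 < x -> rpow x p = Rpower x p.
Proof. intros. unfold rpow. destruct Req_EM_T; [lra|auto]. Qed.

Lemma rpow_inv y q : 0 <= y -> 0 < q -> rpow (rpow y q) (/ q) = y.
Proof. intros Hy Hq. destruct (Req_dec y 0) as [->|Hn].
  unfold rpow at 2. destruct Req_EM_T; [|lra]. unfold rpow. destruct Req_EM_T; lra.
  rewrite (rpow_pos y) by lra. rewrite rpow_pos by (unfold Rpower; apply exp_pos).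
  rewrite Rpower_mult. rewrite Rinv_r by lra. apply Rpower_1; lra. Qed.

Lemma rpow_le u v p : 0 <= u <= v -> 0 <= p -> rpow u p <= rpow v p.
Proof. intros Huv Hp. destruct (Req_dec u 0) as [->|Hn].
  unfold rpow at 1. destruct Req_EM_T; [|lra]. apply rpow_ge0.
  rewrite !rpow_pos by lra. apply Rle_Rpower_l; lra. Qed.

Lemma const_ge q : 1 <= q -> / 12 <= / 4 * rpow (2 / ((q + 1) * (q + 2))) (/ q).
Proof. intros Hq.
  assert (Hpos : 0 < 2 / ((q + 1) * (q + 2))).
  { apply Rdiv_lt_0_compat; [lra|]. apply Rmult_lt_0_compat; lra. }
  rewrite rpow_pos by exact Hpos.
  assert (H3 : Rpower (Rpower 3 (- q)) (/ q) = / 3).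
  { rewrite Rpower_mult. replace (- q * / q) with (- (1)) by (field; lra).
    rewrite Rpower_Ropp, Rpower_1; lra. }
  assert (Hle : Rpower 3 (- q) <= 2 / ((q + 1) * (q + 2))).
  { rewrite Rpower_Ropp.
    assert (HA : Rpower 3 q = 3 * exp ((q - 1) * ln 3)).
    { replace q with (1 + (q - 1)) at 1 by ring. rewrite Rpower_plus, Rpower_1 by lra.
      reflexivity. }
    assert (HL : 1 <= ln 3).
    { rewrite <- (ln_exp 1). apply ln_le. apply exp_pos. apply exp_le_3. }
    set (s := q - 1) in *. set (L := ln 3) in *.
    assert (HE : exp (s * L) = exp (s * L / 2) * exp (s * L / 2)).
    { rewrite <- exp_plus. f_equal. field. }
    assert (HE1 := exp_ineq1_le (s * L / 2)).
    assert (Hs : 0 <= s) by (unfold s; lra).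
    assert (HsL : s <= s * L) by nra.
    assert (Hbig : (q + 1) * (q + 2) <= 2 * Rpower 3 q).
    { rewrite HA, HE. replace q with (s + 1) by (unfold s; ring). nra. }
    assert (0 < Rpower 3 q) by (unfold Rpower; apply exp_pos).
    unfold Rdiv.
    apply (Rmult_le_reg_l (Rpower 3 q * ((q + 1) * (q + 2)))).
    apply Rmult_lt_0_compat; [lra| apply Rmult_lt_0_compat; lra].
    field_simplify; try lra. }
  assert (0 < Rpower 3 (- q)) by (unfold Rpower; apply exp_pos).
  assert (Rpower (Rpower 3 (- q)) (/ q) <= Rpower (2 / ((q + 1) * (q + 2))) (/ q)).
  { apply Rle_Rpower_l. left; apply Rinv_0_lt_compat; lra. lra. }
  lra. Qed.

Lemma is_derive_eq (f : R -> R) x l l' : is_derive f x l -> l = l' -> is_derive f x l'.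
Proof. intros H <-; exact H. Qed.

Lemma cmp (g dg : R -> R) c t : c <= t ->
  (forall s, c <= s <= t -> is_derive g s (dg s)) ->
  (forall s, c <= s <= t -> dg s <= 0) -> g t <= g c.
Proof. intros Hct Hd Hn. destruct (Req_dec c t) as [<-|Hne]. lra.
  destruct (MVT_gen g c t dg) as [xi [Hxi Heq]].
  - intros y Hy. rewrite Rmin_left, Rmax_right in Hy by lra. apply Hd; lra.
  - intros y Hy. rewrite Rmin_left, Rmax_right in Hy by lra.
    apply derivable_continuous_pt. exists (dg y). apply is_derive_Reals, Hd; lra.
  - rewrite Rmin_left, Rmax_right in Hxi by lra.
    assert (dg xi <= 0) by (apply Hn; lra). nra. Qed.

Lemma abs_bound (g dg h dh : R -> R) c t : c <= t -> g c = 0 -> h c = 0 ->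
  (forall s, c <= s <= t -> is_derive g s (dg s)) ->
  (forall s, c <= s <= t -> is_derive h s (dh s)) ->
  (forall s, c <= s <= t -> Rabs (dg s) <= dh s) -> Rabs (g t) <= h t.
Proof. intros Hct Hg Hh Hdg Hdh Hb.
  assert (H1 : g t - h t <= g c - h c).
  { apply (cmp (fun s => g s - h s) (fun s => dg s - dh s)); auto.
    intros s Hs. apply (is_derive_minus g h); auto.
    intros s Hs. specialize (Hb s Hs). apply Rabs_le_between in Hb. lra. }
  assert (H2 : - g t - h t <= - g c - h c).
  { apply (cmp (fun s => - g s - h s) (fun s => - dg s - dh s)); auto.
    intros s Hs. apply (is_derive_minus (fun s => - g s) h); auto.
    apply (is_derive_opp g); auto.
    intros s Hs. specialize (Hb s Hs). apply Rabs_le_between in Hb. lra. }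
  apply Rabs_le_between. lra. Qed.

Lemma trap_one (f f' f'' : R -> R) c d K e : c < d -> 0 < e ->
  (forall y, c - e < y < d + e -> derivable_pt_lim f y (f' y) /\ derivable_pt_lim f' y (f'' y)) ->
  (forall s, c <= s <= d -> Rabs (f'' s) <= K) ->
  Rabs (RInt f c d - (f c + f d) / 2 * (d - c)) <= K * (d - c) ^ 3 / 12.
Proof. intros Hcd He Hder HK.
  assert (Hcont : forall y, c - e < y < d + e -> continuous f y).
  { intros y Hy. apply (ex_derive_continuous (K:=R_AbsRing) (V:=R_NormedModule)). exists (f' y). apply is_derive_Reals, Hder; auto. }
  assert (HR : forall s, c <= s <= d -> is_derive (fun t => RInt f c t) s (f s)).
  { intros s Hs. apply (is_derive_RInt f (fun t => RInt f c t) c s).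
    - exists (mkposreal e He). intros y Hy. change (Rabs (y - s) < e) in Hy.
      apply Rabs_lt_between' in Hy. apply (RInt_correct (V:=R_CompleteNormedModule)). apply (ex_RInt_continuous (V:=R_CompleteNormedModule)).
      intros z Hz. apply Hcont. 
      assert (Rmin c y <= z <= Rmax c y) by exact Hz.
      unfold Rmin, Rmax in *. destruct (Rle_dec c y); lra.
    - apply Hcont; lra. }
  set (psi := fun t => (f t - f c) / 2 - (t - c) / 2 * f' t).
  set (phi := fun t => RInt f c t - (t - c) / 2 * (f c + f t)).
  assert (Hpsi : forall s, c <= s <= d -> is_derive psi s (- (s - c) * f'' s / 2)).
  { intros s Hs. destruct (Hder s) as [H1 H2]; [lra|].
    apply is_derive_Reals in H1. apply is_derive_Reals in H2.
    unfold psi. auto_derive.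
    - split; [exists (f' s); exact H1|split; [exists (f'' s); exact H2|exact I]].
    - replace (Derive (fun x => f x) s) with (f' s) by (symmetry; apply is_derive_unique; exact H1). replace (Derive (fun x => f' x) s) with (f'' s) by (symmetry; apply is_derive_unique; exact H2). field. }
  assert (Hphi : forall s, c <= s <= d -> is_derive phi s (psi s)).
  { intros s Hs. destruct (Hder s) as [H1 H2]; [lra|].
    apply is_derive_Reals in H1.
    assert (Hq : is_derive (fun t => (t - c) / 2 * (f c + f t)) s
                   ((f c + f s) / 2 + (s - c) / 2 * f' s)).
    { auto_derive.
      - exists (f' s); exact H1.
      - replace (Derive (fun x => f x) s) with (f' s) by (symmetry; apply is_derive_unique; exact H1). field. }
    unfold phi. eapply is_derive_eq.
    apply (is_derive_minus (K:=R_AbsRing) (V:=R_NormedModule) (fun t => RInt f c t) (fun t => (t - c) / 2 * (f c + f t))).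
    apply HR; auto. exact Hq.
    unfold psi. unfold minus, plus, opp; simpl. field. }
  assert (Hpsib : forall t, c <= t <= d -> Rabs (psi t) <= K * (t - c) ^ 2 / 4).
  { intros t Ht.
    apply (abs_bound psi (fun s => - (s - c) * f'' s / 2) (fun s => K * (s - c) ^ 2 / 4)
       (fun s => K * (s - c) / 2) c t).
    - lra.
    - unfold psi. field.
    - field.
    - intros s Hs. apply Hpsi; lra.
    - intros s Hs. auto_derive; auto. field.
    - intros s Hs. assert (HKs := HK s ltac:(lra)).
      replace (- (s - c) * f'' s / 2) with ((s - c) / 2 * (- f'' s)) by field.
      rewrite Rabs_mult, Rabs_Ropp, (Rabs_right ((s - c) / 2)) by lra.
      assert (0 <= (s - c) / 2) by lra. nra. }
  assert (Hfin : Rabs (phi d) <= K * (d - c) ^ 3 / 12).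
  { apply (abs_bound phi psi (fun s => K * (s - c) ^ 3 / 12)
       (fun s => K * (s - c) ^ 2 / 4) c d).
    - lra.
    - unfold phi. rewrite RInt_point. unfold zero; simpl. field.
    - field.
    - intros s Hs. apply Hphi; lra.
    - intros s Hs. auto_derive; auto. field.
    - intros s Hs. apply Hpsib; lra. }
  unfold phi in Hfin. replace (RInt f c d - (f c + f d) / 2 * (d - c))
    with (RInt f c d - (d - c) / 2 * (f c + f d)) by field. exact Hfin. Qed.

Lemma interior_nbhd (I : R -> Prop) (HI : is_interval I) a b :
  interior I a -> interior I b -> a < b ->
  exists e, 0 < e /\ forall y, a - e < y < b + e -> interior I y.
Proof. intros [da Ha] [db Hb] Hab.
  set (e := Rmin da db).
  assert (He : 0 < e) by (unfold e; apply Rmin_pos; apply cond_pos).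
  assert (Hea : e <= da) by apply Rmin_l. assert (Heb : e <= db) by apply Rmin_r.
  assert (HIa : I a) by (apply Ha; unfold disc; rewrite Rminus_diag, Rabs_R0; apply cond_pos).
  assert (HIb : I b) by (apply Hb; unfold disc; rewrite Rminus_diag, Rabs_R0; apply cond_pos).
  assert (HV : forall y, a - e < y < b + e -> I y).
  { intros y Hy. destruct (Rle_dec y a).
    - apply Ha. unfold disc. rewrite Rabs_left1 by lra. lra.
    - destruct (Rle_dec b y).
      + apply Hb. unfold disc. rewrite Rabs_right by lra. lra.
      + apply (HI a y b); auto; lra. }
  exists e. split; auto. intros y Hy.
  assert (Hd : 0 < Rmin (y - (a - e)) (b + e - y)) by (apply Rmin_pos; lra).
  exists (mkposreal _ Hd). intros z Hz. unfold disc in Hz; simpl in Hz.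
  apply HV. apply Rabs_lt_between' in Hz.
  assert (Rmin (y - (a - e)) (b + e - y) <= y - (a - e)) by apply Rmin_l.
  assert (Rmin (y - (a - e)) (b + e - y) <= b + e - y) by apply Rmin_r. lra. Qed.

Theorem proposition3
  (I : R -> Prop) (HI : is_interval I) (HI0 : forall x, I x -> 0 <= x)
  (f f' f'' : R -> R)
  (Hf' : forall x, interior I x -> derivable_pt_lim f x (f' x))
  (Hf'' : forall x, interior I x -> derivable_pt_lim f' x (f'' x))
  (a b : R) (Ha : interior I a) (Hb : interior I b) (Hab : a < b)
  (q : R) (Hq : 1 <= q)
  (Hqc : quasi_convex_on (fun t => rpow (Rabs (f'' t)) q) a b)
  (n : nat) (x : nat -> R) (Hd : is_partition a b n x)
  (pr : Riemann_integrable f a b) :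
  Rabs (trap_err f a b pr n x) <=
    / 4 * rpow (2 / ((q + 1) * (q + 2))) (/ q) *
    rsum n (fun i => (x (S i) - x i) ^ 3 *
      rpow (Rmax (rpow (Rabs (f'' (x i))) q) (rpow (Rabs (f'' (x (S i)))) q)) (/ q)).
Proof.
  destruct Hd as [Hx0 [Hxn Hinc]].
  assert (Hge : forall i, (i <= n)%nat -> a <= x i).
  { induction i; intros Hi. lra. assert (a <= x i) by (apply IHi; lia).
    assert (x i < x (S i)) by (apply Hinc; lia). lra. }
  assert (Hle : forall k i, (i + k = n)%nat -> x i <= b).
  { induction k; intros i Hi. replace i with n by lia. lra.
    assert (x (S i) <= b) by (apply IHk; lia).
    assert (x i < x (S i)) by (apply Hinc; lia). lra. }
  assert (Hin : forall i, (i <= n)%nat -> a <= x i <= b).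
  { intros i Hi. split; auto. apply (Hle (n - i)%nat). lia. }
  destruct (interior_nbhd I HI a b Ha Hb Hab) as [e [He Hint]].
  assert (Hcont : forall z, a <= z <= b -> continuous f z).
  { intros z Hz. apply (ex_derive_continuous (K:=R_AbsRing) (V:=R_NormedModule)).
    exists (f' z). apply is_derive_Reals, Hf', Hint; lra. }
  assert (Hex : forall u v, a <= u <= b -> a <= v <= b -> ex_RInt f u v).
  { intros u v Hu Hv. apply (ex_RInt_continuous (V:=R_CompleteNormedModule)).
    intros z Hz. apply Hcont. unfold Rmin, Rmax in Hz.
    destruct (Rle_dec u v); lra. }
  assert (Hsplit : forall k, (k <= n)%nat ->
    RInt f a (x k) = rsum k (fun i => RInt f (x i) (x (S i)))).
  { induction k; intros Hk.
    - rewrite rsum_0, Hx0. apply (RInt_point (V:=R_CompleteNormedModule)).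
    - rewrite rsum_S, <- IHk by lia.
      rewrite <- (RInt_Chasles (V:=R_CompleteNormedModule) f a (x k) (x (S k))).
      reflexivity.
      apply Hex; [lra| apply Hin; lia].
      apply Hex; apply Hin; lia. }
  assert (Htot : trap_err f a b pr n x =
    rsum n (fun i => RInt f (x i) (x (S i)) - (f (x i) + f (x (S i))) / 2 * (x (S i) - x i))).
  { unfold trap_err, trap. rewrite rsum_minus, <- Hsplit by lia.
    rewrite Hxn, <- (RInt_Reals f a b pr). reflexivity. }
  rewrite Htot, <- rsum_scal.
  eapply Rle_trans; [apply rsum_abs|]. apply rsum_le. intros i Hi.
  set (c := x i). set (d := x (S i)).
  assert (Hcd : c < d) by (apply Hinc; auto).
  assert (Hc : a <= c <= b) by (apply Hin; lia).
  assert (Hdd : a <= d <= b) by (apply Hin; lia).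
  set (M := Rmax (rpow (Rabs (f'' c)) q) (rpow (Rabs (f'' d)) q)).
  assert (HK : forall s, c <= s <= d -> Rabs (f'' s) <= rpow M (/ q)).
  { intros s Hs.
    assert (Hq1 := Hqc c d ((d - s) / (d - c)) Hc Hdd).
    assert (Hl : 0 <= (d - s) / (d - c) <= 1).
    { split. apply Rdiv_le_0_compat; lra.
      apply (Rmult_le_reg_r (d - c)); [lra|]. field_simplify; lra. }
    specialize (Hq1 Hl). cbv beta in Hq1.
    replace ((d - s) / (d - c) * c + (1 - (d - s) / (d - c)) * d) with s in Hq1
      by (field; lra).
    rewrite <- (rpow_inv (Rabs (f'' s)) q) by (try apply Rabs_pos; lra).
    apply rpow_le. split. apply rpow_ge0. exact Hq1.
    left; apply Rinv_0_lt_compat; lra. }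
  assert (Hone := trap_one f f' f'' c d (rpow M (/ q)) e Hcd He).
  assert (Hb1 : Rabs (RInt f c d - (f c + f d) / 2 * (d - c)) <= rpow M (/ q) * (d - c) ^ 3 / 12).
  { apply Hone; auto. intros y Hy. split; [apply Hf'|apply Hf'']; apply Hint; lra. }
  assert (HC := const_ge q Hq).
  assert (0 <= rpow M (/ q)) by apply rpow_ge0.
  assert (0 <= (d - c) ^ 3) by (apply pow_le; lra).
  assert (0 <= (d - c) ^ 3 * rpow M (/ q)) by (apply Rmult_le_pos; lra).
  eapply Rle_trans; [exact Hb1|].
  nra.
Qed.
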